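(* Let $n=2m$ with $m\ge1$, $K$ a field, and let $K(2,n)\subset K[x_{ij}:1\le i\le j\le n]$ be the monomial ideal generated by all products $x_{ij}x_{hk}$ (with $i\le j$, $h\le k$) not involving any variable $x_{a,n+1-a}$ ($1\le a\le m$) and satisfying at least one of: (1) $a+b=n+1$ for some $a\in\{i,j\}$ and $b\in\{h,k\}$; (2) $i<h$ and $j<k$. Let $\Delta$ be the simplicial complex on vertex set $\{(i,j):1\le i\le j\le n\}$ whose Stanley–Reisner ideal is $K(2,n)$, and $\Delta'=\operatorname{core}(\Delta)$. Then $\Delta'$ is pure and has exactly $2^{n-1}$ facets, each with $m$ vertices.
   Context: A cone point of a simplicial complex is a vertex lying in every facet; $\operatorname{core}(\Delta)$ is the restriction of $\Delta$ to the vertices that are not cone points. *)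

(* Defs.v *)
From mathcomp Require Import all_boot.
Set Implicit Arguments. Unset Strict Implicit. Unset Printing Implicit Defensive.

(* Vertices are pairs (i,j) of naturals 1 <= i <= j <= n, encoded in
   'I_n.+1 * 'I_n.+1 (so that the indices are the paper's, 1-based). *)
Definition pt (n : nat) := ('I_n.+1 * 'I_n.+1)%type.

Definition vert (n : nat) : {set pt n} :=
  [set p : pt n | (0 < p.1) && (p.1 <= p.2)].

Definition antidiag (n : nat) (p : pt n) : bool := p.1 + p.2 == n.+1.

Definition gen (n : nat) (p q : pt n) : bool :=
  [&& p \in vert n, q \in vert n, ~~ antidiag p, ~~ antidiag q &
      [|| (p.1 + q.1 == n.+1), (p.1 + q.2 == n.+1), (p.2 + q.1 == n.+1),
          (p.2 + q.2 == n.+1) | (p.1 < q.1) && (p.2 < q.2)]].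

(* Stanley--Reisner complex, on vertex set V, of the monomial ideal generated
   by the quadratic monomials x_p x_q with g p q: F is a face iff the
   squarefree monomial x_F is not in the ideal, i.e. no generator divides x_F.
   A generator x_p x_q divides the squarefree x_F iff p <> q and p, q in F. *)
Definition sr_complex (T : finType) (V : {set T}) (g : rel T) : {set {set T}} :=
  [set F : {set T} | (F \subset V) &&
     [forall p in F, forall q in F, (p != q) ==> ~~ g p q]].

Definition facets (T : finType) (D : {set {set T}}) : {set {set T}} :=
  [set F in D | [forall G in D, (F \subset G) ==> (G == F)]].

Definition cone_point (T : finType) (D : {set {set T}}) (v : T) : bool :=
  [forall F in facets D, v \in F].

Definition core (T : finType) (V : {set T}) (D : {set {set T}}) : {set {set T}} :=
  [set F in D | F \subset [set v in V | ~~ cone_point D v]].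

Definition pure (T : finType) (D : {set {set T}}) : Prop :=
  exists d, forall F, F \in facets D -> #|F| = d.

Definition Delta (n : nat) : {set {set pt n}} := sr_complex (vert n) (@gen n).

(* Main.v *)
Require Import Defs.
From mathcomp Require Import all_boot.
From mathcomp Require Import zify.
Set Implicit Arguments. Unset Strict Implicit. Unset Printing Implicit Defensive.

Ltac nsetg := repeat match goal with
 | |- context [@nat_of_ord ?k ?t] => let x := fresh "x" in
     move: (@ltn_ord k t); set x := @nat_of_ord k t; clearbody x
 end.
Ltac glia := nsetg; lia.
Ltac gencard := repeat match goal with
 | |- context [#|?A|] => let x := fresh "c" in set x := #|A|; clearbody x
 end.
Ltac clearall := repeat match goal with H : _ |- _ => clear H end.
Ltac nlia := repeat match goal with
  | H : is_true (leq _ _) |- _ => revert H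
  | H : is_true (andb (leq _ _) (leq _ _)) |- _ => revert H
  | H : is_true (~~ (leq _ _)) |- _ => revert H
  | H : is_true (~~ (andb (leq _ _) (leq _ _))) |- _ => revert H
  | H : @eq nat _ _ |- _ => revert H
  | H : ~ (@eq nat _ _) |- _ => revert H
  end; nsetg; gencard; clearall; lia.

Definition sub n (p q : pt n) := (q.1 <= p.1) && (p.2 <= q.2).
Definition chain n (F : {set pt n}) := [forall p in F, forall q in F, sub p q || sub q p].
Definition ordd n (p : pt n) := p.1 <= p.2.
Definition ends n (F : {set pt n}) : {set 'I_n.+1} :=
  [set x | [exists p in F, (p.1 == x) || (p.2 == x)]].
Definition sfree n (U : {set 'I_n.+1}) := [forall x in U, forall y in U, x + y != n.+1].
Definition width n (p : pt n) := p.2 - p.1.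

Lemma pt_eq n (p q : pt n) : p.1 = q.1 :> nat -> p.2 = q.2 :> nat -> p = q.
Proof. by case: p q => [a b] [c d] /= /val_inj -> /val_inj ->. Qed.

Lemma chainP n (F : {set pt n}) :
  chain F -> forall p q, p \in F -> q \in F -> sub p q || sub q p.
Proof. by move=> /forall_inP h p q pF qF; move/forall_inP: (h p pF); apply. Qed.

Lemma chain_sub n (F G : {set pt n}) : F \subset G -> chain G -> chain F.
Proof.
move=> /subsetP sFG hG; apply/forall_inP=> p pF; apply/forall_inP=> q qF.
by apply: (chainP hG); apply: sFG.
Qed.

Lemma endsP n (F : {set pt n}) x :
  reflect (exists2 p, p \in F & (p.1 = x) \/ (p.2 = x)) (x \in ends F).
Proof.
rewrite inE; apply: (iffP existsP) => [[p /andP [pF /orP [/eqP|/eqP] e]]|[p pF [e|e]]].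
- by exists p => //; left.
- by exists p => //; right.
- by exists p; rewrite pF e eqxx.
- by exists p; rewrite pF e eqxx orbT.
Qed.

Lemma ends_subset n (F G : {set pt n}) : F \subset G -> ends F \subset ends G.
Proof.
move=> /subsetP s; apply/subsetP => x /endsP [p pF e]; apply/endsP; exists p => //.
exact: s.
Qed.

Lemma ends0 n : ends (set0 : {set pt n}) = set0.
Proof. by apply/setP => x; rewrite !inE; apply/existsP => [[p]]; rewrite inE. Qed.

Lemma endsU1 n (p : pt n) F : ends (p |: F) = p.1 |: (p.2 |: ends F).
Proof.
apply/setP => x; apply/endsP/idP; rewrite !in_setU1.
- move=> [q]; rewrite !in_setU1 => /orP [/eqP ->|qF] [<-|<-]; rewrite ?eqxx ?orbT //.
  + by apply/orP; right; apply/orP; right; apply/endsP; exists q => //; left.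
  + by apply/orP; right; apply/orP; right; apply/endsP; exists q => //; right.
- move=> /orP [/eqP ->|/orP [/eqP ->|/endsP [q qF e]]].
  + by exists p; rewrite ?setU11 //; left.
  + by exists p; rewrite ?setU11 //; right.
  + by exists q; rewrite // setU1r.
Qed.

Lemma widest n (F : {set pt n}) p0 : p0 \in F -> {in F, forall p, ordd p} -> chain F ->
  exists2 w, w \in F & {in F, forall q, sub q w}.
Proof.
move=> p0F ho hc.
case: (arg_maxnP (fun p : pt n => width p) p0F) => w wF hw.
exists w => // q qF; have := hw q qF; have := chainP hc qF wF.
have := ho q qF; have := ho w wF.
rewrite /sub /width /ordd => h1 h2 /orP [//|h3] h4; lia.
Qed.

Lemma ends_in n (F : {set pt n}) w : {in F, forall q, sub q w} -> {in F, forall p, ordd p} ->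
  forall x, x \in ends F -> w.1 <= x <= w.2.
Proof.
move=> hs ho x /endsP [p pF e]; have := hs p pF; have := ho p pF.
rewrite /sub /ordd => h1 h2. case: e => <-; move: h1 h2; set a := nat_of_ord p.1; set b := nat_of_ord p.2; set c := nat_of_ord w.1; set d := nat_of_ord w.2. all: lia.
Qed.

Lemma ends_miss n (F : {set pt n}) w : w \notin F -> {in F, forall q, sub q w} ->
  {in F, forall p, ordd p} -> chain F -> (w.1 \notin ends F) || (w.2 \notin ends F).
Proof.
move=> wF hs ho hc.
case: (set_0Vmem F) => [->|[p0 p0F]]; first by rewrite ends0 inE.
have [w' w'F hw'] := widest p0F ho hc.
have hb := ends_in hw' ho.
rewrite -negb_and; apply/negP => /andP [/hb h1 /hb h2].
have := hs w' w'F; rewrite /sub => h3.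
have ew : w' = w by apply: pt_eq; nlia.
by move: wF; rewrite -ew w'F.
Qed.

Lemma card_le_ends n (F : {set pt n}) : {in F, forall p, ordd p} -> chain F -> #|F| <= #|ends F|.
Proof.
have [k] := ubnP #|F|; elim: k F => // k IH F ltF ho hc.
case: (set_0Vmem F) => [->|[p0 p0F]]; first by rewrite cards0.
have [w wF hw] := widest p0F ho hc.
set F' := F :\ w.
have sF : F' \subset F by apply: subD1set.
have eF : #|F| = #|F'|.+1 by rewrite (cardsD1 w F) wF.
have ho' : {in F', forall p, ordd p} by move=> p pF; apply: ho; apply: (subsetP sF).
have hc' := chain_sub sF hc.
have IH' : #|F'| <= #|ends F'| by apply: IH => //; lia.
suff : ends F' \proper ends F by move/proper_card; lia.
rewrite properE ends_subset //=.
have wF' : w \notin F' by rewrite !inE eqxx.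
have hw' : {in F', forall q, sub q w} by move=> q qF; apply: hw; apply: (subsetP sF).
case/orP: (ends_miss wF' hw' ho' hc') => h; apply/subsetPn.
- by exists w.1 => //; apply/endsP; exists w => //; left.
- by exists w.2 => //; apply/endsP; exists w => //; right.
Qed.

Definition C n (U : {set 'I_n.+1}) : {set {set pt n}} :=
  [set F : {set pt n} | [&& [forall p in F, ordd p], chain F, ends F == U & #|F| == #|U|]].

Lemma CP n (U : {set 'I_n.+1}) (F : {set pt n}) :
  reflect [/\ {in F, forall p, ordd p}, chain F, ends F = U & #|F| = #|U|] (F \in C U).
Proof.
rewrite inE; apply: (iffP idP).
- by case/and4P => /forall_inP h1 h2 /eqP h3 /eqP h4.
- by case=> h1 h2 h3 h4; apply/and4P; split => //; [apply/forall_inP|apply/eqP|apply/eqP].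
Qed.

Lemma ends1 n (p : pt n) : ends [set p] = p.1 |: [set p.2].
Proof. by rewrite -(setU0 [set p]) endsU1 ends0 setU0. Qed.

Lemma ex_min_ord n (U : {set 'I_n.+1}) u0 : u0 \in U ->
  exists2 a, a \in U & forall x, x \in U -> a <= x.
Proof.
move=> u0U; case: (arg_minnP (fun x : 'I_n.+1 => nat_of_ord x) u0U) => a aU h.
by exists a.
Qed.

Lemma ex_max_ord n (U : {set 'I_n.+1}) u0 : u0 \in U ->
  exists2 a, a \in U & forall x, x \in U -> x <= a.
Proof.
move=> u0U; case: (arg_maxnP (fun x : 'I_n.+1 => nat_of_ord x) u0U) => a aU h.
by exists a.
Qed.

Lemma C_fwd n (U : {set 'I_n.+1}) (a b : 'I_n.+1) (F : {set pt n}) :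
  a \in U -> b \in U -> (forall x, x \in U -> a <= x <= b) -> F \in C U -> 0 < #|F| ->
  (a, b) \in F /\
  (if a \in ends (F :\ (a, b)) then F :\ (a,b) \in C (U :\ b)
   else F :\ (a,b) \in C (U :\ a)).
Proof.
move=> aU bU hab /CP [ho hc he hcard] F0.
have [p0 p0F] : exists p0, p0 \in F.
  by case: (set_0Vmem F) => [e|[x xF]]; [move: F0; rewrite e cards0|exists x].
have [w wF hw] := widest p0F ho hc.
have hb := ends_in hw ho.
have w1U : w.1 \in U by rewrite -he; apply/endsP; exists w => //; left.
have w2U : w.2 \in U by rewrite -he; apply/endsP; exists w => //; right.
have := hb a; have := hb b; rewrite he => /(_ bU) h1 /(_ aU) h2.
have := hab _ w1U; have := hab _ w2U => h3 h4.
have ew : w = (a, b) by apply: (@pt_eq n w (a, b)); nlia.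
have abF : (a, b) \in F by rewrite -ew.
split => //.
set F' := F :\ (a, b).
have sF : F' \subset F by apply: subD1set.
have ho' : {in F', forall p, ordd p} by move=> p pF; apply: ho; apply: (subsetP sF).
have hc' := chain_sub sF hc.
have abF' : (a, b) \notin F' by rewrite !inE eqxx.
have hw' : {in F', forall q, sub q (a, b)}.
  by move=> q qF; rewrite -ew; apply: hw; apply: (subsetP sF).
have eF : #|F| = #|F'|.+1 by rewrite (cardsD1 (a, b) F) abF.
have seU : ends F' \subset U by rewrite -he; apply: ends_subset.
have cle := card_le_ends ho' hc'.
have key : forall c, c \in U -> c \notin ends F' -> F' \in C (U :\ c).
  move=> c cU cF; apply/CP; split => //.
  - apply/eqP; rewrite eqEcard; apply/andP; split.
      apply/subsetP => x xF; rewrite !inE (subsetP seU) // andbT.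
      by apply/eqP => exc; move: cF; rewrite -exc xF.
    by move: hcard; rewrite (cardsD1 c U) cU eF /=; nlia.
  - by move: hcard; rewrite (cardsD1 c U) cU eF /=; nlia.
case: ifP => aF; last by apply: key => //; rewrite aF.
apply: key => //.
by move: (ends_miss abF' hw' ho' hc'); rewrite /= aF.
Qed.

Lemma C_bwd n (U : {set 'I_n.+1}) (a b c : 'I_n.+1) (F : {set pt n}) :
  a \in U -> b \in U -> a < b -> (forall x, x \in U -> a <= x <= b) -> (c == a) || (c == b) ->
  F \in C (U :\ c) ->
  [/\ (a, b) \notin F, (a, b) |: F \in C U & (a \in ends F) = (c == b)].
Proof.
move=> aU bU ltab hab hc /CP [ho hcc he hcard].
have cU : c \in U by case/orP: hc => /eqP ->.
have cF : c \notin ends F by rewrite he !inE eqxx.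
have abF : (a, b) \notin F.
  apply/negP => abF; move/negP: cF; apply; apply/endsP; exists (a, b) => //.
  by case/orP: hc => /eqP ->; [left|right].
have inU : forall p, p \in F -> (a <= p.1) && (p.2 <= b).
  move=> p pF.
  have h1 : p.1 \in U by apply: (subsetP (subD1set U c)); rewrite -he; apply/endsP; exists p => //; left.
  have h2 : p.2 \in U by apply: (subsetP (subD1set U c)); rewrite -he; apply/endsP; exists p => //; right.
  by have := hab _ h1; have := hab _ h2; nlia.
split => //.
- apply/CP; split.
  + move=> p; rewrite in_setU1 => /orP [/eqP ->|pF]; last exact: ho.
    by rewrite /ordd /=; nlia.
  + apply/forall_inP => p; rewrite in_setU1 => /orP [/eqP ->|pF];
    apply/forall_inP => q; rewrite in_setU1 => /orP [/eqP ->|qF].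
    * by rewrite /sub /= !leqnn.
    * by apply/orP; right; rewrite /sub /=; apply: inU.
    * by apply/orP; left; rewrite /sub /=; apply: inU.
    * exact: (chainP hcc).
  + rewrite endsU1 he /=; apply/setP => x; rewrite !in_setU1 !in_setD1.
    case/orP: hc => /eqP ->; case: (eqVneq x a) => [->|xa] /=; rewrite ?aU //;
      case: (eqVneq x b) => [->|xb] /=; rewrite ?bU ?orbT ?eqxx ?andbT //.
  + by rewrite cardsU1 abF hcard (cardsD1 c U) cU.
- rewrite he !in_setD1 aU andbT.
  have nab : a != b by apply/eqP => eab; move: ltab; rewrite eab ltnn.
  by case/orP: hc => /eqP ->; rewrite eqxx /= ?(negbTE nab).
Qed.

Lemma ord_neq_lt n (a x : 'I_n.+1) : x != a -> a <= x -> a < x.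
Proof. by rewrite -val_eqE /= ltn_neqAle eq_sym => -> ->. Qed.

Lemma C_card n k (U : {set 'I_n.+1}) : #|U| = k.+1 -> #|C U| = 2 ^ k.
Proof.
elim: k U => [|k IH] U hU.
  have /cards1P [u ->] : #|U| == 1 by rewrite hU.
  suff -> : C [set u] = [set [set (u, u)]] by rewrite cards1.
  apply/setP => F; rewrite in_set1; apply/CP/eqP.
  - case=> ho hc he hcard.
    have /cards1P [p ep] : #|F| == 1 by rewrite hcard cards1.
    move: he; rewrite ep ends1 => he.
    have e1 : p.1 = u by apply/set1P; rewrite -he setU11.
    have e2 : p.2 = u by apply/set1P; rewrite -he setU1r // set11.
    by case: p e1 e2 {ep he} => p1 p2 /= -> ->.
  - move=> ->; split.
    + by move=> p /set1P ->; rewrite /ordd.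
    + by apply/forall_inP => p /set1P ->; apply/forall_inP => q /set1P ->; rewrite /sub !leqnn.
    + by rewrite ends1 /= setUid.
    + by rewrite !cards1.
have [u0 u0U] : exists u0, u0 \in U.
  by apply/set0Pn; rewrite -card_gt0 hU.
have [a aU amin] := ex_min_ord u0U.
have [b bU bmax] := ex_max_ord u0U.
have hab : forall x, x \in U -> a <= x <= b by move=> x xU; rewrite amin // bmax.
have cUa : #|U :\ a| = k.+1 by move: hU; rewrite (cardsD1 a U) aU /=; nlia.
have cUb : #|U :\ b| = k.+1 by move: hU; rewrite (cardsD1 b U) bU /=; nlia.
have ltab : a < b.
  have [x xUa] : exists x, x \in U :\ a.
    by apply/set0Pn; rewrite -card_gt0 cUa.
  move: xUa; rewrite in_setD1 => /andP [xa xU].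
  by apply: (leq_trans (ord_neq_lt xa (amin x xU))); apply: bmax.
pose P := [set F : {set pt n} | a \notin ends (F :\ (a, b))].
have inP : forall F, (F \in P) = (a \notin ends (F :\ (a, b))) by move=> F; rewrite inE.
have cardF : forall F, F \in C U -> 0 < #|F| by move=> F /CP [_ _ _ ->]; rewrite hU.
have inj : forall c, (c == a) || (c == b) ->
   {in C (U :\ c) &, injective (fun F => (a, b) |: F)}.
  move=> c hc F1 F2 h1 h2 /= e.
  have [n1 _ _] := C_bwd aU bU ltab hab hc h1.
  have [n2 _ _] := C_bwd aU bU ltab hab hc h2.
  by rewrite -(setU1K n1) -(setU1K n2) e.
have E1 : C U :&: P = [set (a, b) |: F | F in C (U :\ a)].
  apply/setP => F; rewrite in_setI inP; apply/idP/idP.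
  - case/andP => FC aF.
    have [abF] := C_fwd aU bU hab FC (cardF F FC); rewrite (negbTE aF) => h.
    by apply/imsetP; exists (F :\ (a, b)) => //; rewrite setD1K.
  - case/imsetP => F' F'C ->.
    have [n1 h1 h2] := C_bwd aU bU ltab hab (c:=a) (introT orP (or_introl (eqxx a))) F'C.
    by rewrite h1 setU1K // h2 -val_eqE /= neq_ltn ltab.
have E2 : C U :\: P = [set (a, b) |: F | F in C (U :\ b)].
  apply/setP => F; rewrite in_setD inP negbK; apply/idP/idP.
  - case/andP => aF FC.
    have [abF] := C_fwd aU bU hab FC (cardF F FC); rewrite aF => h.
    by apply/imsetP; exists (F :\ (a, b)) => //; rewrite setD1K.
  - case/imsetP => F' F'C ->.
    have [n1 h1 h2] := C_bwd aU bU ltab hab (c:=b) (introT orP (or_intror (eqxx b))) F'C.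
    by rewrite h1 setU1K // h2 eqxx.
rewrite -(cardsID P (C U)) E1 E2.
rewrite (card_in_imset (inj a _)) ?eqxx // (card_in_imset (inj b _)) ?eqxx ?orbT //.
by rewrite (IH _ cUa) (IH _ cUb) expnS mul2n addnn.
Qed.

Lemma sfreeP n (U : {set 'I_n.+1}) : sfree U -> forall x y, x \in U -> y \in U -> x + y != n.+1.
Proof. by move=> /forall_inP h x y xU yU; move/forall_inP: (h x xU); apply. Qed.

Lemma DeltaP n (F : {set pt n}) :
  reflect (F \subset vert n /\ forall p q, p \in F -> q \in F -> p != q -> ~~ gen p q)
          (F \in Delta n).
Proof.
rewrite /Delta /sr_complex inE; apply: (iffP andP) => [[h1 h2]|[h1 h2]]; split => //.
- move=> p q pF qF npq; move/forall_inP: h2 => /(_ p pF) /forall_inP /(_ q qF).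
  by rewrite npq.
- apply/forall_inP => p pF; apply/forall_inP => q qF; apply/implyP; exact: h2.
Qed.

Lemma facetsP (T : finType) (D : {set {set T}}) F :
  reflect (F \in D /\ forall G, G \in D -> F \subset G -> G = F) (F \in facets D).
Proof.
rewrite /facets inE; apply: (iffP andP) => [[h1 /forall_inP h2]|[h1 h2]]; split => //.
- by move=> G GD FG; apply/eqP; move/implyP: (h2 G GD); apply.
- by apply/forall_inP => G GD; apply/implyP => FG; rewrite (h2 G GD FG).
Qed.

Lemma facet_exists (T : finType) (D : {set {set T}}) G :
  G \in D -> exists2 F, F \in facets D & G \subset F.
Proof.
move=> GD; case: (@maxset_exists T (fun A => A \in D) G GD) => F /maxsetP [FD FM] GF.
by exists F => //; apply/facetsP; split.
Qed.

Definition sig n (x : 'I_n.+1) : 'I_n.+1 := inord (n.+1 - x).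

Lemma sigE n (x : 'I_n.+1) : 0 < x -> sig x = n.+1 - x :> nat.
Proof. by move=> x0; rewrite /sig inordK //; nlia. Qed.

Lemma vertP n (p : pt n) : reflect (0 < p.1 /\ p.1 <= p.2) (p \in vert n).
Proof. by rewrite inE; apply: andP. Qed.

Lemma cone_antidiag n k (hn : n = k.+1.*2) v : v \in vert n ->
  cone_point (Delta n) v = antidiag v.
Proof.
move=> vV; rewrite /cone_point; apply/forall_inP/idP.
- move=> hv; apply/negPn/negP => nav.
  have /vertP [v0 v12] := vV.
  pose q : pt n := (sig v.1, sig v.1).
  have qv : q.1 = n.+1 - v.1 :> nat by rewrite /= sigE.
  have qV : q \in vert n by apply/vertP; rewrite /= sigE //; split => //; nlia.
  have qD : [set q] \in Delta n.
    apply/DeltaP; split; first by rewrite sub1set.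
    by move=> p1 p2 /set1P -> /set1P ->; rewrite eqxx.
  have [F FD qF] := facet_exists qD.
  have vF := hv F FD.
  move/facetsP: FD => [/DeltaP [_ h] _].
  have qv' : q != v.
    apply/negP => /eqP e; move: qv; rewrite e; nlia.
  move: (h q v (subsetP qF q (set11 q)) vF qv').
  rewrite /gen qV vV nav /= /antidiag; move: qv; rewrite /= => qv'' .
  nlia.
- move=> av F /facetsP [FD FM].
  suff <- : v |: F = F by rewrite setU11.
  apply: FM; last exact: subsetUr.
  move/DeltaP: FD => [FV h]; apply/DeltaP; split.
    by rewrite subUset sub1set vV FV.
  move=> p q; rewrite !in_setU1 => /orP [/eqP ->|pF] /orP [/eqP ->|qF]; rewrite ?eqxx //.
  + by rewrite /gen av /= !andbF.
  + by rewrite /gen av /= !andbF.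
  + exact: h.
Qed.

Definition good n (F : {set pt n}) := [&& F \subset vert n, chain F & sfree (ends F)].

Lemma ends_mem1 n (F : {set pt n}) p : p \in F -> p.1 \in ends F.
Proof. by move=> pF; apply/endsP; exists p => //; left. Qed.
Lemma ends_mem2 n (F : {set pt n}) p : p \in F -> p.2 \in ends F.
Proof. by move=> pF; apply/endsP; exists p => //; right. Qed.

Lemma core_good n k (hn : n = k.+1.*2) (F : {set pt n}) :
  (F \in core (vert n) (Delta n)) = good F.
Proof.
rewrite /core inE; apply/idP/idP.
- case/andP => /DeltaP [FV h] FW.
  have nA : forall p, p \in F -> ~~ antidiag p.
    move=> p pF; move: (subsetP FW p pF); rewrite inE => /andP [pV].
    by rewrite (cone_antidiag hn pV).
  have pV : forall p, p \in F -> (0 < p.1) && (p.1 <= p.2).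
    by move=> p pF; move: (subsetP FV p pF); rewrite inE.
  apply/and3P; split => //.
  + apply/forall_inP => p pF; apply/forall_inP => q qF.
    case: (eqVneq p q) => [<-|npq]; first by rewrite /sub !leqnn.
    have g1 := h p q pF qF npq; have g2 := h q p qF pF ltac:(by rewrite eq_sym).
    move: g1 g2 (nA p pF) (nA q qF) (pV p pF) (pV q qF).
    rewrite /gen (subsetP FV p pF) (subsetP FV q qF) /antidiag /sub /=.
    nlia.
  + apply/forall_inP => x /endsP [p pF ex]; apply/forall_inP => y /endsP [q qF ey].
    case: (eqVneq p q) => [epq|npq].
      rewrite -epq in ey; move: (nA p pF) (pV p pF) hn; rewrite /antidiag.
      by case: ex => <-; case: ey => <-; nlia.
    have g1 := h p q pF qF npq.
    move: g1 (nA p pF) (nA q qF) (pV p pF) (pV q qF).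
    rewrite /gen (subsetP FV p pF) (subsetP FV q qF) /antidiag /=.
    by case: ex => <-; case: ey => <-; nlia.
- case/and3P => FV hc hs.
  apply/andP; split.
  + apply/DeltaP; split => // p q pF qF npq.
    rewrite /gen; apply/negP => /and5P [_ _ _ _].
    have s11 := sfreeP hs (ends_mem1 pF) (ends_mem1 qF).
    have s12 := sfreeP hs (ends_mem1 pF) (ends_mem2 qF).
    have s21 := sfreeP hs (ends_mem2 pF) (ends_mem1 qF).
    have s22 := sfreeP hs (ends_mem2 pF) (ends_mem2 qF).
    move: s11 s12 s21 s22 (chainP hc pF qF); rewrite /sub; nlia.
  + apply/subsetP => p pF; rewrite inE (subsetP FV p pF) /=.
    rewrite (cone_antidiag hn (subsetP FV p pF)) /antidiag.
    by have := sfreeP hs (ends_mem1 pF) (ends_mem2 pF); nlia.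
Qed.

Definition pidx n k (x : 'I_n.+1) : 'I_k.+1 := inord (minn x (n.+1 - x)).-1.

Lemma pidx_val n k (hn : n = k.+1.*2) (x : 'I_n.+1) : 0 < x ->
  pidx k x = (minn x (n.+1 - x)).-1 :> nat.
Proof. by move=> x0; rewrite /pidx inordK //; nlia. Qed.

Lemma pidx_inj n k (hn : n = k.+1.*2) (U : {set 'I_n.+1}) :
  sfree U -> (forall x, x \in U -> 0 < x) -> {in U &, injective (@pidx n k)}.
Proof.
move=> hs hp x y xU yU e; apply: val_inj => /=.
have := sfreeP hs xU yU; have := pidx_val hn (hp x xU); have := pidx_val hn (hp y yU).
have := hp x xU; have := hp y yU; rewrite e; nlia.
Qed.

Lemma card_sfree n k (hn : n = k.+1.*2) (U : {set 'I_n.+1}) :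
  sfree U -> (forall x, x \in U -> 0 < x) -> #|U| <= k.+1.
Proof.
move=> hs hp; rewrite -(card_in_imset (pidx_inj hn hs hp)).
by apply: leq_trans (max_card _) _; rewrite card_ord.
Qed.

Lemma ends_pos n (F : {set pt n}) : F \subset vert n -> forall x, x \in ends F -> 0 < x.
Proof.
move=> FV x /endsP [p pF ex]; have /vertP [h1 h2] := subsetP FV p pF.
by case: ex => <-; nlia.
Qed.

Lemma good_ordd n (F : {set pt n}) : good F -> {in F, forall p, ordd p}.
Proof. by case/and3P => FV _ _ p pF; have /vertP [_ h] := subsetP FV p pF. Qed.

Lemma good_card n k (hn : n = k.+1.*2) (F : {set pt n}) : good F -> #|F| <= #|ends F| <= k.+1.
Proof.
move=> g; have ho := good_ordd g; case/and3P: g => FV hc hs.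
by rewrite card_le_ends //= (card_sfree hn hs (ends_pos FV)).
Qed.

Definition cont n (p : pt n) (x : 'I_n.+1) := (p.1 <= x) && (x <= p.2).

Definition J n (F : {set pt n}) (x : 'I_n.+1) : pt n :=
  match [pick I in [set I in F | ~~ cont I x]] with
  | Some I0 => let w := [arg max_(I > I0 in [set I in F | ~~ cont I x]) width I] in
      ((if x <= w.1 then x else w.1), (if w.2 <= x then x else w.2))
  | None => (x, x)
  end.

Lemma J_spec n (F : {set pt n}) (x : 'I_n.+1) :
  [/\ (J F x).1 = x :> nat, (J F x).2 = x :> nat & forall I, I \in F -> cont I x] \/
  exists w, [/\ w \in F, ~~ cont w x, (forall I, I \in F -> ~~ cont I x -> width I <= width w),
     ((J F x).1 = x :> nat /\ x <= w.1 \/ (J F x).1 = w.1 :> nat /\ w.1 < x) &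
     ((J F x).2 = x :> nat /\ w.2 <= x \/ (J F x).2 = w.2 :> nat /\ x < w.2)].
Proof.
rewrite /J; case: pickP => [I0 I0A | none].
- right; case: (arg_maxnP (fun I => width I) I0A) => w wA wmax.
  have wA' : w \in [set I in F | ~~ cont I x] := wA.
  move: wA'; rewrite inE => /andP [wF wc].
  exists w; split => //.
  + move=> I IF Ic; apply: (wmax I).
    by change (I \in [set I in F | ~~ cont I x]); rewrite inE IF Ic.
  + rewrite /=; case: ifP => h /=; first by left.
    by right; split => //; have := negbT h; rewrite -ltnNge.
  + rewrite /=; case: ifP => h /=; first by left.
    by right; split => //; have := negbT h; rewrite -ltnNge.
- left; split => // I IF; move: (none I); rewrite inE IF /=.
  by move/negbFE.
Qed.

Lemma J_ordd n (F : {set pt n}) (x : 'I_n.+1) : {in F, forall p, ordd p} -> ordd (J F x).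
Proof.
move=> ho; rewrite /ordd.
case: (J_spec F x) => [[e1 e2 _]|[w [wF wc wmax h1 h2]]]; first by nlia.
by move: h1 h2 (ho w wF); rewrite /ordd; nlia.
Qed.

Lemma J_pos n (F : {set pt n}) (x : 'I_n.+1) : F \subset vert n -> 0 < x -> 0 < (J F x).1.
Proof.
move=> FV x0.
case: (J_spec F x) => [[e1 e2 _]|[w [wF wc wmax h1 h2]]]; first by nlia.
have /vertP [w0 w12] := subsetP FV w wF.
by move: h1; nlia.
Qed.

Lemma J_x n (F : {set pt n}) (x : 'I_n.+1) : ((J F x).1 = x :> nat) \/ ((J F x).2 = x :> nat).
Proof.
case: (J_spec F x) => [[e1 e2 _]|[w [wF wc wmax h1 h2]]]; first by left.
by move: h1 h2 wc; rewrite /cont; nlia.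
Qed.

Lemma ord_in n (E : {set 'I_n.+1}) (x y : 'I_n.+1) : y = x :> nat -> y \in x |: E.
Proof. by move=> /val_inj ->; rewrite setU11. Qed.

Lemma ord_in2 n (E : {set 'I_n.+1}) (x y z : 'I_n.+1) : y = z :> nat -> z \in E -> y \in x |: E.
Proof. by move=> /val_inj -> zE; rewrite setU1r. Qed.

Lemma J_ends n (F : {set pt n}) (x : 'I_n.+1) :
  (J F x).1 \in x |: ends F /\ (J F x).2 \in x |: ends F.
Proof.
case: (J_spec F x) => [[e1 e2 _]|[w [wF wc wmax h1 h2]]].
  by split; apply: ord_in.
split.
- case: h1 => [[e _]|[e _]]; first exact: ord_in.
  by apply: ord_in2 e _; apply: ends_mem1.
- case: h2 => [[e _]|[e _]]; first exact: ord_in.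
  by apply: ord_in2 e _; apply: ends_mem2.
Qed.

Lemma J_chain n (F : {set pt n}) (x : 'I_n.+1) : {in F, forall p, ordd p} -> chain F -> chain (J F x |: F).
Proof.
move=> ho hc.
have key : forall I, I \in F -> sub I (J F x) || sub (J F x) I.
  move=> I IF.
  case: (J_spec F x) => [[e1 e2 hall]|[w [wF wc wmax h1 h2]]].
    by move: (hall I IF) e1 e2; rewrite /cont /sub; nlia.
  move: (wmax I IF) wc (chainP hc IF wF) (ho I IF) (ho w wF) h1 h2.
  rewrite /cont /sub /width /ordd; nlia.
apply/forall_inP => p; rewrite in_setU1 => /orP [/eqP ->|pF];
  apply/forall_inP => q; rewrite in_setU1 => /orP [/eqP ->|qF].
- by rewrite /sub !leqnn.
- by rewrite orbC; apply: key.
- exact: key.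
- by have := chainP hc pF qF.
Qed.

Lemma J_inj n (F : {set pt n}) : {in F, forall p, ordd p} -> chain F -> injective (J F).
Proof.
move=> ho hc x y e; apply: val_inj => /=.
move: (J_spec F x) (J_spec F y); rewrite e.
case=> [[e1 e2 hall]|[w [wF wc wmax h1 h2]]];
case=> [[f1 f2 hall']|[w' [wF' wc' wmax' g1 g2]]].
- by nlia.
- by move: e1 e2 g1 g2 wc' (ho w' wF'); rewrite /cont /ordd; nlia.
- by move: f1 f2 h1 h2 wc (ho w wF); rewrite /cont /ordd; nlia.
- move: h1 h2 g1 g2 wc wc' (ho w wF) (ho w' wF') (chainP hc wF wF').
  by rewrite /cont /ordd /sub; nlia.
Qed.

Lemma sfree_sub n (U V : {set 'I_n.+1}) : U \subset V -> sfree V -> sfree U.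
Proof.
move=> /subsetP UV hs; apply/forall_inP => x xU; apply/forall_inP => y yU.
by apply: (sfreeP hs); apply: UV.
Qed.

Lemma sfree_U1 n k (hn : n = k.+1.*2) (E : {set 'I_n.+1}) x :
  sfree E -> sig x \notin E -> 0 < x -> sfree (x |: E).
Proof.
move=> hs sx x0.
have key : forall v, v \in E -> x + v != n.+1.
  move=> v vE; apply/negP => /eqP h; move/negP: sx; apply.
  have -> : sig x = v by apply: ord_inj; rewrite sigE //; move: h; nlia.
  exact: vE.
apply/forall_inP => u; rewrite in_setU1 => /orP [/eqP ->|uE];
  apply/forall_inP => v; rewrite in_setU1 => /orP [/eqP ->|vE].
- by move: hn; nlia.
- exact: key.
- by rewrite addnC; apply: key.
- by have := sfreeP hs uE vE.
Qed.

Lemma sigK n (y : 'I_n.+1) : 0 < y -> sig (sig y) = y.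
Proof.
move=> y0; apply: ord_inj.
have s0 : 0 < sig y by rewrite sigE //; nlia.
rewrite (sigE s0) (sigE y0); nlia.
Qed.

Lemma extend n k (hn : n = k.+1.*2) (F : {set pt n}) :
  good F -> #|F| < k.+1 -> exists2 y, y \notin F & good (y |: F).
Proof.
move=> g ltF; have ho := good_ordd g; case/and3P: g => FV hc hs.
pose S := [set x : 'I_n.+1 | (0 < x) && (sig x \notin ends F)].
have cS : k.+1 <= #|S|.
  pose y (i : 'I_k.+1) : 'I_n.+1 := inord i.+1.
  have yv : forall i, y i = i.+1 :> nat by move=> i; rewrite /y inordK //; nlia.
  have y0 : forall i, 0 < y i by move=> i; rewrite yv.
  have sy : forall i, sig (y i) = n - i :> nat by move=> i; rewrite sigE // yv; nlia.
  pose g (i : 'I_k.+1) : 'I_n.+1 := if sig (y i) \in ends F then sig (y i) else y i.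
  have ginj : injective g.
    move=> i j; rewrite /g => e; apply: ord_inj; move: (congr1 (@nat_of_ord _) e).
    move: (sy i) (sy j) (yv i) (yv j) hn.
    by case: ifP => _; case: ifP => _; nlia.
  have gS : forall i, g i \in S.
    move=> i; rewrite /g inE; case: ifP => h.
    - have -> : 0 < sig (y i) by rewrite sy; nlia.
      rewrite sigK //=; apply/negP => h'.
      by move: (sfreeP hs h' h); rewrite sy yv; nlia.
    - by rewrite y0 h.
  rewrite -{1}(card_ord k.+1) -cardsT -(card_imset _ ginj).
  by apply: subset_leq_card; apply/subsetP => z /imsetP [i _ ->].
have [x xS JF] : exists2 x, x \in S & J F x \notin F.
  case: (boolP [exists x in S, J F x \notin F]) => [/exists_inP [x xS h]|/exists_inPn h].
    by exists x.
  have : #|J F @: S| <= #|F|.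
    by apply: subset_leq_card; apply/subsetP => z /imsetP [x xS ->]; move: (h x xS); rewrite negbK.
  rewrite (card_imset _ (J_inj ho hc)) => h2.
  by move: (leq_ltn_trans h2 ltF); rewrite ltnNge cS.
move: xS; rewrite inE => /andP [x0 sx].
exists (J F x) => //.
apply/and3P; split.
- rewrite subUset sub1set FV andbT; apply/vertP; split; first exact: J_pos.
  exact: J_ordd.
- exact: J_chain.
- apply: (sfree_sub _ (sfree_U1 hn hs sx x0)).
  rewrite endsU1; case: (J_ends F x) => h1 h2.
  apply/subsetP => u; rewrite !in_setU1 => /orP [/eqP ->|/orP [/eqP ->|uE]] //.
  - by move: h1; rewrite in_setU1.
  - by move: h2; rewrite in_setU1.
  - by rewrite uE orbT.
Qed.

Lemma facets_core n k (hn : n = k.+1.*2) (F : {set pt n}) :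
  (F \in facets (core (vert n) (Delta n))) = good F && (#|F| == k.+1).
Proof.
apply/facetsP/andP.
- case; rewrite (core_good hn) => g FM; split => //.
  have /andP [h1 h2] := good_card hn g.
  rewrite eqn_leq (leq_trans h1 h2) /= leqNgt; apply/negP => lt.
  have [y yF gy] := extend hn g lt.
  have e := FM (y |: F) ltac:(by rewrite (core_good hn)) (subsetUr _ _).
  by move: yF; rewrite -e setU11.
- case=> g /eqP cF; split; first by rewrite (core_good hn).
  move=> G; rewrite (core_good hn) => gG FG; apply/eqP; rewrite eq_sym eqEcard FG /=.
  have /andP [h1 h2] := good_card hn gG; rewrite cF; exact: leq_trans h1 h2.
Qed.

Definition SF n k : {set {set 'I_n.+1}} :=
  [set U : {set 'I_n.+1} | [&& sfree U, [forall x in U, 0 < x] & #|U| == k.+1]].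

Lemma SFP n k (U : {set 'I_n.+1}) :
  reflect [/\ sfree U, (forall x, x \in U -> 0 < x) & #|U| = k.+1] (U \in SF n k).
Proof.
rewrite inE; apply: (iffP and3P) => [[h1 /forall_inP h2 /eqP h3]|[h1 h2 h3]]; split => //.
- by apply/forall_inP.
- by apply/eqP.
Qed.

Lemma facets_card n k (hn : n = k.+1.*2) :
  #|facets (core (vert n) (Delta n))| = #|SF n k| * 2 ^ k.
Proof.
set A := facets _.
rewrite -sum1_card (partition_big (fun F => ends F) (fun U => U \in SF n k)); last first.
  move=> F; rewrite (facets_core hn) => /andP [g /eqP cF].
  have /andP [h1 h2] := good_card hn g.
  case/and3P: g => FV hc hs; apply/SFP; split => //; first exact: ends_pos.
  by apply/eqP; rewrite eqn_leq h2 -{1}cF h1.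
rewrite -sum_nat_const; apply: eq_bigr => U /SFP [hs hp hU].
rewrite -(C_card hU) -sum1_card; apply: eq_bigl => F /=.
apply/andP/CP.
- case; rewrite (facets_core hn) => /andP [g /eqP cF] /eqP eU.
  have ho := good_ordd g; case/and3P: g => FV hc _.
  by split => //; rewrite cF hU.
- case=> ho hc he hcard; split; last by rewrite he.
  rewrite (facets_core hn) hcard hU eqxx andbT; apply/and3P; split => //.
  + apply/subsetP => p pF; apply/vertP; split; last exact: ho.
    by apply: hp; rewrite -he; apply: ends_mem1.
  + by rewrite he.
Qed.

Lemma pidx_full n k (hn : n = k.+1.*2) (U : {set 'I_n.+1}) :
  sfree U -> (forall x, x \in U -> 0 < x) ->
  (forall i : 'I_k.+1, exists2 x, x \in U & pidx k x = i) -> #|U| = k.+1.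
Proof.
move=> hs hp hf; rewrite -(card_in_imset (pidx_inj hn hs hp)).
have -> : [set pidx k x | x in U] = setT.
  by apply/setP => i; rewrite inE; have [x xU <-] := hf i; apply: imset_f.
by rewrite cardsT card_ord.
Qed.

Lemma SF_ex1 n k (hn : n = k.+1.*2) (U : {set 'I_n.+1}) (x : 'I_n.+1) : U \in SF n k -> 0 < x ->
  (x \in U) = (sig x \notin U).
Proof.
move=> /SFP [hs hp hU] x0.
have sx : sig x = n.+1 - x :> nat by rewrite sigE.
apply/idP/idP.
- move=> xU; apply/negP => sU; move: (sfreeP hs xU sU); rewrite sx; nlia.
- move=> sU; apply/negPn/negP => xU.
  have full : [set pidx k y | y in U] = setT.
    apply/eqP; rewrite eqEcard subsetT /= cardsT card_ord.
    by rewrite (card_in_imset (pidx_inj hn hs hp)) hU.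
  have : pidx k x \in [set pidx k y | y in U] by rewrite full.
  case/imsetP => y yU e.
  have y0 := hp y yU.
  move: (pidx_val hn x0) (pidx_val hn y0); rewrite e => e1 e2.
  have : (y = x :> nat) \/ (y = sig x :> nat) by rewrite sx; move: e1 e2; nlia.
  case=> /ord_inj ey.
  + by move: xU; rewrite -ey yU.
  + by move: sU; rewrite -ey yU.
Qed.

Definition hV n k (V : {set 'I_k.+1}) : {set 'I_n.+1} :=
  [set x : 'I_n.+1 | (0 < x) && (if x <= k.+1 then inord x.-1 \in V else inord (n - x) \notin V)].

Definition gU n k (U : {set 'I_n.+1}) : {set 'I_k.+1} := [set i : 'I_k.+1 | (inord i.+1 : 'I_n.+1) \in U].

Lemma gU_hV n k (hn : n = k.+1.*2) (V : {set 'I_k.+1}) : @gU n k (@hV n k V) = V.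
Proof.
apply/setP => i; rewrite !inE.
have vi : (inord i.+1 : 'I_n.+1) = i.+1 :> nat by rewrite inordK //; nlia.
rewrite vi /=.
have -> : (i.+1 <= k.+1) = true by apply: ltn_ord.
by rewrite inord_val.
Qed.

Lemma SF_hV n k (hn : n = k.+1.*2) (U : {set 'I_n.+1}) : U \in SF n k -> @hV n k (@gU n k U) = U.
Proof.
move=> US; have /SFP [hs hp hU] := US.
apply/setP => x; rewrite !inE.
case: (posnP x) => [x0|x0] /=.
  by apply/esym/negP => xU; move: (hp x xU); rewrite x0.
case: ifP => hx.
- have -> : (inord (inord x.-1 : 'I_k.+1).+1 : 'I_n.+1) = x.
    apply: ord_inj; rewrite inordK; rewrite inordK //; nlia.
  by [].
- have -> : (inord (inord (n - x) : 'I_k.+1).+1 : 'I_n.+1) = sig x.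
    apply: ord_inj; rewrite sigE // inordK; rewrite inordK //; move: hx; nlia.
  by rewrite (SF_ex1 hn US x0).
Qed.

Lemma hV_SF n k (hn : n = k.+1.*2) (V : {set 'I_k.+1}) : @hV n k V \in SF n k.
Proof.
have memh : forall x : 'I_n.+1, x \in @hV n k V ->
   (0 < x) /\ (if x <= k.+1 then inord x.-1 \in V else inord (n - x) \notin V).
  by move=> x; rewrite inE => /andP.
have hp : forall x, x \in @hV n k V -> 0 < x by move=> x /memh [].
have hs : sfree (@hV n k V).
  apply/forall_inP => x /memh [x0 hx]; apply/forall_inP => y /memh [y0 hy].
  apply/negP => /eqP e.
  move: hx hy; case: ifP => lx; case: ifP => ly.
  - by move: lx ly e hn; nlia.
  - have -> : n - y = x.-1 by move: e hn; nlia.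
    by move=> ->.
  - have -> : n - x = y.-1 by move: e hn; nlia.
    by move=> /negP h /h.
  - by move: lx ly e hn; nlia.
apply/SFP; split => //; apply: (pidx_full hn hs hp) => i.
case: (boolP (i \in V)) => iV.
- exists (inord i.+1).
    rewrite inE; have vi : (inord i.+1 : 'I_n.+1) = i.+1 :> nat by rewrite inordK //; nlia.
    rewrite vi /=; have -> : (i.+1 <= k.+1) = true by apply: ltn_ord.
    by rewrite inord_val.
  apply: ord_inj; rewrite pidx_val //; first by rewrite inordK //; nlia.
  by rewrite inordK //; nlia.
- exists (inord (n - i)).
    rewrite inE; have vi : (inord (n - i) : 'I_n.+1) = n - i :> nat by rewrite inordK //; nlia.
    rewrite vi; have -> : (0 < n - i) = true by nlia.
    have -> : (n - i <= k.+1) = false by nlia.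
    have -> : n - (n - i) = i by nlia.
    by rewrite inord_val.
  apply: ord_inj; rewrite pidx_val //; first by rewrite inordK //; nlia.
  by rewrite inordK //; nlia.
Qed.

Lemma SF_card n k (hn : n = k.+1.*2) : #|SF n k| = 2 ^ k.+1.
Proof.
have -> : SF n k = [set @hV n k V | V in [set: {set 'I_k.+1}]].
  apply/setP => U; apply/idP/imsetP.
  - by move=> US; exists (@gU n k U); rewrite ?inE // SF_hV.
  - by case=> V _ ->; apply: hV_SF.
rewrite card_imset; last first.
  by move=> V1 V2 e; rewrite -(gU_hV hn V1) -(gU_hV hn V2) e.
by rewrite -powersetT card_powerset cardsT card_ord.
Qed.

Theorem lemma5p1 (m n : nat) (hm : 1 <= m) (hn : n = m.*2) :
  let D' := core (vert n) (Delta n) in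
  pure D' /\ #|facets D'| = 2 ^ (n - 1) /\
  (forall F, F \in facets D' -> #|F| = m).
Proof.
move=> D'; rewrite /D'.
case: m hm hn => // k _ hn.
have hf : forall F, F \in facets (core (vert n) (Delta n)) -> #|F| = k.+1.
  by move=> F; rewrite (facets_core hn) => /andP [_ /eqP].
split; first by exists k.+1.
split => //.
rewrite (facets_card hn) (SF_card hn) -expnD; congr (2 ^ _); nlia.
Qed.
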